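(* Let $n,m$ be positive integers, $V=\{1,\dots,n\}$, and let $CCP$ be the cycle clustering polytope for $V$ and $m$ clusters (defined in the context). Let $K=\{(i_1,i_2),(i_2,i_3),\dots,(i_{\ell-1},i_\ell),(i_\ell,i_1)\}$ be a directed cycle on distinct vertices $i_1,\dots,i_\ell\in V$ with $1<\ell<m$, and let $U\subsetneq K$ be a strict subset. Then the extended subtour inequality $$\sum_{(i,j)\in K} z_{i,j}+\sum_{(i,j)\in U} y_{i,j}\le |K|-1$$ is valid for $CCP$.
   Context: Let $V=\{1,\dots,n\}$, $E=\{\{i,j\}: i,j\in V, i\neq j\}$, $A=\{(i,j)\in V\times V: i\neq j\}$, and $\mathcal{K}=\{1,\dots,m\}$. Cluster indices are taken cyclically: $x_{i,m+1}=x_{i,1}$ and $x_{i,0}=x_{i,m}$. There are binary variables $x_{i,s}$ ($i\in V$, $s\in\mathcal{K}$), $y_{i,j}$ for each $\{i,j\}\in E$ with $i<j$ (with the shorthand $y_{j,i}=y_{i,j}$), and $z_{i,j}$ for each $(i,j)\in A$. The cycle clustering polytope $CCP$ is the convex hull of all binary $(x,y,z)$ satisfying: $\sum_{s\in\mathcal{K}} x_{i,s}=1$ for all $i\in V$; $\sum_{i\in V}x_{i,s}\ge 1$ for all $s\in\mathcal{K}$; $y_{i,j}+z_{i,j}+z_{j,i}\le 1$ for all $\{i,j\}\in E$; $x_{i,s}+x_{j,s}-y_{i,j}+z_{i,j}-x_{j,s+1}-x_{i,s-1}\le 1$ for all $(i,j)\in A$, $s\in\mathcal{K}$; and $x_{i,s}+x_{j,s+1}-z_{i,j}+y_{i,j}-x_{j,s}-x_{i,s+1}\le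 1$ for all $(i,j)\in A$, $s\in\mathcal{K}$. *)

(* Defs.v *)
From HB Require Import structures.
From mathcomp Require Import all_boot all_order all_algebra.
Set Implicit Arguments. Unset Strict Implicit. Unset Printing Implicit Defensive.
Import Order.TTheory GRing.Theory Num.Theory.
Local Open Scope ring_scope.

(* The coordinate y_{i,j}
   exists only for i < j; entries [cy i j] with i >= j (and [cz i i]) are
   dummy coordinates that no constraint or inequality ever reads. *)
Record ccpoint (R : Type) (n m : nat) := CCPoint {
  cx : 'I_n -> 'I_m -> R;
  cy : 'I_n -> 'I_n -> R;
  cz : 'I_n -> 'I_n -> R }.

Definition yv (R : Type) (n m : nat) (p : ccpoint R n m) (i j : 'I_n) : R :=
  if (i < j)%N then cy p i j else cy p j i.

Definition is01 (R : numDomainType) (a : R) : Prop := a = 0 \/ a = 1.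

(* binary points satisfying the defining constraints of CCP;
   cluster indices are cyclic: s+1 is [ordS s], s-1 is [ord_pred s]. *)
Definition ccp_feasible (R : numDomainType) (n m : nat) (p : ccpoint R n m) : Prop :=
  [/\ (forall (i : 'I_n) (s : 'I_m), is01 (cx p i s)),
      (forall i j : 'I_n, (i < j)%N -> is01 (cy p i j)) &
      (forall i j : 'I_n, i != j -> is01 (cz p i j))] /\
  [/\ (forall i : 'I_n, \sum_(s < m) cx p i s = 1),
      (forall s : 'I_m, 1 <= \sum_(i < n) cx p i s),
      (forall i j : 'I_n, (i < j)%N -> cy p i j + cz p i j + cz p j i <= 1),
      (forall i j : 'I_n, i != j -> forall s,
         cx p i s + cx p j s - yv p i j + cz p i j
           - cx p j (ordS s) - cx p i (ord_pred s) <= 1) &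
      (forall i j : 'I_n, i != j -> forall s,
         cx p i s + cx p j (ordS s) - cz p i j + yv p i j
           - cx p j s - cx p i (ordS s) <= 1)].

Definition in_CCP (R : numDomainType) (n m : nat) (p : ccpoint R n m) : Prop :=
  exists (k : nat) (lam : 'I_k -> R) (P : 'I_k -> ccpoint R n m),
    [/\ (forall t : 'I_k, ccp_feasible (P t)),
        (forall t : 'I_k, 0 <= lam t) &
        \sum_(t < k) lam t = 1] /\
    [/\ 
        (forall (i : 'I_n) (s : 'I_m), cx p i s = \sum_(t < k) lam t * cx (P t) i s),
        (forall i j : 'I_n, cy p i j = \sum_(t < k) lam t * cy (P t) i j) &
        (forall i j : 'I_n, cz p i j = \sum_(t < k) lam t * cz (P t) i j)].

(* Main.v *)
Require Import Defs.
From HB Require Import structures.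
From mathcomp Require Import all_boot all_order all_algebra zify lra.
Import Order.TTheory GRing.Theory Num.Theory.
Set Implicit Arguments. Unset Strict Implicit.
Local Open Scope ring_scope.

Lemma ordS_neq m (i : 'I_m) : (1 < m)%N -> ordS i != i.
Proof.
move=> hm; apply/negP=> /eqP /(congr1 val) /=.
have := ltn_ord i; case: (ltnP i.+1 m) => h1 h2.
  by rewrite modn_small //; lia.
have -> : i.+1 = m by lia.
by rewrite modnn; lia.
Qed.

Lemma ord_pred_neq m (i : 'I_m) : (1 < m)%N -> ord_pred i != i.
Proof.
move=> hm; apply/negP=> /eqP E.
have := @ordS_neq m (ord_pred i) hm; by rewrite ord_predK E eqxx.
Qed.

Lemma feas_cluster (R : numDomainType) n m (P : ccpoint R n m) :
  ccp_feasible P -> exists c : 'I_n -> 'I_m, forall i s, cx P i s = (s == c i)%:R.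
Proof.
case=> [[h01 _ _] [hsum _ _ _ _]].
suff H : forall i, exists c, forall s, cx P i s = (s == c)%:R.
  by have /fin_all_exists[c hc] := H; exists c.
move=> i.
have [c hc] : exists c, cx P i c = 1.
  case: (pickP (fun c => cx P i c == 1))=> [c /eqP hc|hn]; first by exists c.
  have : \sum_(s < m) cx P i s = 0.
    apply: big1=> s _; case: (h01 i s)=> // e.
    by have := hn s; rewrite e eqxx.
  by rewrite hsum; move/eqP; rewrite oner_eq0.
exists c=> s; case: eqP=> [->|/eqP ne]; first by rewrite hc.
have := hsum i; rewrite (bigD1 c) //= hc => E.
have : \sum_(k < m | k != c) cx P i k = 0 by apply: (addrI 1); rewrite E addr0.
move/psumr_eq0P => H; rewrite H //.

by move=> k _; case: (h01 i k)=> ->; rewrite ?ler01.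
Qed.

Section S.
Variables (R : realFieldType) (n m : nat) (P : ccpoint R n m).
Hypothesis hP : ccp_feasible P.

Lemma yz_le i j : i != j -> yv P i j + cz P i j + cz P j i <= 1 /\ is01 (yv P i j).
Proof.
case: hP => [[_ hy _] [_ _ h3 _ _]] ne; rewrite /yv.
case: ltngtP => h; first by split; [exact: h3|exact: hy].
  by split; [rewrite -addrA (addrC (cz P i j)) addrA; exact: h3 | exact: hy].
by move/val_inj: h => h; rewrite h eqxx in ne.
Qed.

Lemma is01_ge0 (a : R) : is01 a -> 0 <= a /\ a <= 1.
Proof. by case=> ->; lra. Qed.

Variable c : 'I_n -> 'I_m.
Hypothesis hc : forall i s, cx P i s = (s == c i)%:R.
Hypothesis hm : (1 < m)%N.

Lemma z1 i j : i != j -> cz P i j = 1 -> c j = ordS (c i).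
Proof.
move=> ne hz; have [h1 /is01_ge0 [h2 h2']] := yz_le ne.
have [_ /is01_ge0 [h3 h3']] : is01 (cz P j i) /\ is01 (cz P j i).
  by case: hP => [[_ _ hz'] _]; split; apply: hz'; rewrite eq_sym.
case: hP => [_ [_ _ _ h4 _]]; have := h4 i j ne (c i).
rewrite !hc eqxx (negbTE (@ord_pred_neq _ (c i) hm)) hz.
case E: (ordS (c i) == c j); first by move/eqP: E.
case: (c i == c j) => /=; clear h4 hc hP => H; exfalso; lra.
Qed.

Lemma y1 i j : i != j -> yv P i j = 1 -> cz P i j = 0 -> c j = c i.
Proof.
move=> ne hy hz.
case: hP => [_ [_ _ _ _ h5]]; have := h5 i j ne (c i).
rewrite !hc eqxx (negbTE (@ordS_neq _ (c i) hm)) hz hy.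
case E: (c i == c j); first by move/eqP: E.
case: (ordS (c i) == c j) => /=; clear h5 hc hP => H; exfalso; lra.
Qed.
End S.

Lemma arc_cases (R : realFieldType) (zz yy : R) (b : bool) :
  is01 zz -> is01 yy -> yy + zz <= 1 ->
  [/\ 0 <= zz + (if b then yy else 0), zz + (if b then yy else 0) <= 1 &
   (0 < zz + (if b then yy else 0) -> zz = 1 \/ [/\ zz = 0, b & yy = 1])].
Proof.
by case=> ->; case=> ->; case: b => /= h; split; try lra; move=> h'; (try by left);
  (try by right); exfalso; lra.
Qed.

Lemma binary_case (R : realFieldType) (n m : nat)
  (ell : nat) (v : 'I_ell -> 'I_n) (hv : injective v)
  (hell1 : (1 < ell)%N) (hell2 : (ell < m)%N)
  (U : {set 'I_ell}) (hU : U \proper [set: 'I_ell])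
  (P : ccpoint R n m) (hP : ccp_feasible P) :
  \sum_(t < ell) (cz P (v t) (v (ordS t)) + (if t \in U then yv P (v t) (v (ordS t)) else 0))
    <= ell%:R - 1.
Proof.
have hm : (1 < m)%N by lia.
have [c hc] := feas_cluster hP.
pose a t := cz P (v t) (v (ordS t)) + (if t \in U then yv P (v t) (v (ordS t)) else 0).
change (\sum_(t < ell) a t <= ell%:R - 1).
have ne t : v t != v (ordS t).
  by apply/negP=> /eqP /hv /eqP; rewrite eq_sym (negbTE (@ordS_neq _ t hell1)).
have hz01 t : is01 (cz P (v t) (v (ordS t))).
  by case: hP => [[_ _ hz] _]; apply: hz.
have hy01 t : is01 (yv P (v t) (v (ordS t))) by case: (yz_le hP (ne t)).
have hyz t : yv P (v t) (v (ordS t)) + cz P (v t) (v (ordS t)) <= 1.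
  have [h _] := yz_le hP (ne t).
  have [[_ _ hz] _] := hP.
  have ne' : v (ordS t) != v t by rewrite eq_sym.
  have : 0 <= cz P (v (ordS t)) (v t) by case: (hz _ _ ne') => ->; lra.
  move: h; clear; lra.
have AC t := arc_cases (t \in U) (hz01 t) (hy01 t) (hyz t).
have [t0 ht0] : exists t0, a t0 <= 0.
  case: (pickP (fun t => a t <= 0)) => [t0 h|hn]; first by exists t0.
  exfalso.
  have pos t : 0 < a t by rewrite ltNge hn.
  have case_t t : (cz P (v t) (v (ordS t)) = 1) \/
      [/\ cz P (v t) (v (ordS t)) = 0, t \in U & yv P (v t) (v (ordS t)) = 1].
    by case: (AC t) => _ _; apply; exact: pos t.
  pose f t := nat_of_ord (c (v t)).
  pose d t := nat_of_bool (cz P (v t) (v (ordS t)) == 1).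
  have key t : f (ordS t) = ((f t + d t) %% m)%N.
    rewrite /f /d; case: (case_t t) => [h|[h hU' hy]].
      by rewrite h eqxx (z1 hP hc hm (ne t) h) /= addn1.
    rewrite h (y1 hP hc hm (ne t) hy h).
    by rewrite eq_sym oner_eq0 addn0 modn_small.
  have hS : (\sum_(t < ell) f (ordS t) = \sum_(t < ell) f t)%N.
    by symmetry; exact: (reindex_inj (@ordS_inj ell)).
  have hmod : (\sum_(t < ell) f t + \sum_(t < ell) d t == \sum_(t < ell) f t + 0 %[mod m])%N.
    rewrite addn0 -big_split /= -hS -modn_summ.
    by rewrite (eq_bigr _ (fun t _ => esym (key t))).
  move: hmod; rewrite eqn_modDl mod0n => /eqP hD0.
  have hDle : (\sum_(t < ell) d t <= ell)%N.
    have : (\sum_(t < ell) d t <= \sum_(t < ell) 1)%N.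
      by apply: leq_sum => t _; rewrite /d; case: (_ == _).
    by rewrite sum1_card card_ord.
  case/properP: hU => _ [t1 _ ht1].
  have hDge : (0 < \sum_(t < ell) d t)%N.
    rewrite (bigD1 t1) //= /d.
    case: (case_t t1) => [h|[_ h _]]; last by rewrite h in ht1.
    by rewrite h eqxx.
  rewrite modn_small in hD0; lia.
rewrite (bigD1 t0) //=.
have : \sum_(t < ell | t != t0) a t <= \sum_(t < ell | t != t0) 1.
  by apply: ler_sum => t _; case: (AC t).
rewrite sumr_const cardC1 card_ord.
have -> : (ell%:R : R) - 1 = ell.-1%:R.
  by rewrite -{1}(prednK (ltnW hell1)) -natr1 addrK.
move=> h; lra.
Qed.

Theorem mainTheorem5 (R : realFieldType) (n m : nat) (hn : (0 < n)%N) (hm : (0 < m)%N)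
  (ell : nat) (v : 'I_ell -> 'I_n) (hv : injective v)
  (hell1 : (1 < ell)%N) (hell2 : (ell < m)%N)
  (U : {set 'I_ell}) (hU : U \proper [set: 'I_ell])
  (p : ccpoint R n m) (hp : in_CCP p) :
  \sum_(t < ell) cz p (v t) (v (ordS t)) + \sum_(t in U) yv p (v t) (v (ordS t))
    <= ell%:R - 1.
Proof.
case: hp => k [lam [P [[hP hlam hsum] [_ hy hz]]]].
have hyv i j : yv p i j = \sum_(q < k) lam q * yv (P q) i j.
  by rewrite /yv; case: ifP => _; apply: hy.

under eq_bigr => t _ do rewrite hz.
under [X in _ + X <= _]eq_bigr => t _ do rewrite hyv.
have E t : (if t \in U then \sum_(q < k) lam q * yv (P q) (v t) (v (ordS t)) else 0)
   = \sum_(q < k) lam q * (if t \in U then yv (P q) (v t) (v (ordS t)) else 0).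
  by case: (t \in U) => //; rewrite big1 // => q _; rewrite mulr0.
rewrite [X in _ + X <= _]big_mkcond /=.
under [X in _ + X <= _]eq_bigr => t _ do rewrite E.
rewrite exchange_big [X in _ + X <= _]exchange_big -big_split /=.
apply: (@le_trans _ _ (\sum_(q < k) lam q * (ell%:R - 1))).
  apply: ler_sum => q _; rewrite -!mulr_sumr -mulrDr; apply: ler_wpM2l => //.
  by have := binary_case hv hell1 hell2 hU (hP q); rewrite big_split.
by rewrite -mulr_suml hsum mul1r.
Qed.
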